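(* Let $\tau$ be a positive random variable with finite mean such that $t\mapsto\mathbb P(\tau\ge t)$ is continuous and $\mathbb P(\tau>t+s)\le\mathbb P(\tau>t)\,\mathbb P(\tau>s)$ for all $t,s\ge0$. Then $\mathbb P(\tau<t)\le e\,t/\mathbb E(\tau)$ for all $t>0$. *)

(* Defs.v *)
From Stdlib Require Import Reals.
Open Scope R_scope.

(* A positive random variable tau is described by its law, equivalently by
   its survival function S t = P(tau > t).  The functions arising this way
   are exactly: values in [0,1], nonincreasing, right-continuous, equal to 1
   on (-oo,0] (since P(tau > 0) = 1), and tending to 0 at +oo. *)
Definition survival_pos (S : R -> R) : Prop :=
  (forall t, 0 <= S t <= 1) /\
  (forall x y, x <= y -> S y <= S x) /\
  (forall t, t <= 0 -> S t = 1) /\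
  (forall t eps, 0 < eps -> exists d, 0 < d /\
       forall u, t <= u < t + d -> Rabs (S u - S t) < eps) /\
  (forall eps, 0 < eps -> exists M, forall t, M <= t -> Rabs (S t) < eps).

(* P(tau >= t) is the left limit of S at t. *)
Definition tail_ge (S : R -> R) (t : R) (p : R) : Prop :=
  forall eps, 0 < eps -> exists d, 0 < d /\
    forall u, t - d < u < t -> Rabs (S u - p) < eps.

(* E(tau) = int_0^oo P(tau > t) dt (improper Riemann integral), finite and = m. *)
Definition has_mean (S : R -> R) (m : R) : Prop :=
  exists pr : (forall b, Riemann_integrable S 0 b),
    forall eps, 0 < eps -> exists M, forall b, M <= b ->
      Rabs (RiemannInt (pr b) - m) < eps.

(* Main.v *)
Require Import Defs.
From Stdlib Require Import Reals Lra Lia.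
Open Scope R_scope.

Section Aux.
Variable S : R -> R.
Hypothesis Hmono : forall x y, x <= y -> S y <= S x.
Variable pr : forall b, Riemann_integrable S 0 b.
Let I b := RiemannInt (pr b).

Lemma seg_up a b : 0 <= a <= b -> I b - I a <= (b - a) * S a.
Proof.
  intros [Ha Hab]. unfold I.
  pose proof (RiemannInt_P23 (pr b) (conj Ha Hab)) as pab.
  rewrite <- (RiemannInt_P26 (pr a) pab (pr b)).
  pose proof (RiemannInt_P14 a b (S a)) as pc.
  assert (H := RiemannInt_P19 pab pc Hab).
  rewrite (RiemannInt_P15 pc) in H.
  assert (RiemannInt pab <= S a * (b - a)).
  { apply H. intros x Hx. unfold fct_cte. apply Hmono. lra. }
  lra.
Qed.

Lemma seg_low a b : 0 <= a <= b -> (b - a) * S b <= I b - I a.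
Proof.
  intros [Ha Hab]. unfold I.
  pose proof (RiemannInt_P23 (pr b) (conj Ha Hab)) as pab.
  rewrite <- (RiemannInt_P26 (pr a) pab (pr b)).
  pose proof (RiemannInt_P14 a b (S b)) as pc.
  assert (H := RiemannInt_P19 pc pab Hab).
  rewrite (RiemannInt_P15 pc) in H.
  assert (S b * (b - a) <= RiemannInt pab).
  { apply H. intros x Hx. unfold fct_cte. apply Hmono. lra. }
  lra.
Qed.

Lemma I0 : I 0 = 0.
Proof. unfold I. apply RiemannInt_P9. Qed.
End Aux.

Theorem mainTheorem8 (S : R -> R) (m : R) (G : R -> R) :
  survival_pos S ->
  has_mean S m ->
  (* G t = P(tau >= t) *)
  (forall t, tail_ge S t (G t)) ->
  continuity G ->
  (forall t s, 0 <= t -> 0 <= s -> S (t + s) <= S t * S s) ->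
  forall t, 0 < t -> 1 - G t <= exp 1 * t / m.
Proof.
  intros [Hb [Hmono [H1 [Hrc _]]]] [pr Hm] Htail _ Hsub t Ht.
  set (I := fun b => RiemannInt (pr b)).
  set (q := S t).
  assert (Hq : 0 <= q <= 1) by apply Hb.
  assert (HSN : forall N, S (INR N * t) <= q ^ N).
  { induction N.
    - simpl. rewrite Rmult_0_l, H1 by lra. lra.
    - rewrite S_INR, Rmult_plus_distr_r, Rmult_1_l; simpl pow.
      pose proof (pos_INR N).
      pose proof (Hsub (INR N * t) t ltac:(nra) ltac:(lra)).
      pose proof (Hb (INR N * t)). fold q in H0. nra. }
  assert (HIN : forall N, (1 - q) * I (INR N * t) <= t * (1 - q ^ N)).
  { induction N.
    - simpl. rewrite Rmult_0_l. unfold I. pose proof (I0 S pr) as Hz; cbv beta in Hz; rewrite Hz. lra.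
    - pose proof (pos_INR N).
      pose proof (seg_up S Hmono pr (INR N * t) (INR (Datatypes.S N) * t)) as Hs.
      rewrite S_INR in *. simpl pow.
      specialize (Hs ltac:(split; nra)). 
      specialize (HSN N).
      replace ((INR N + 1) * t - INR N * t) with t in Hs by ring.
      assert (0 <= 1 - q) by lra.
      assert ((1 - q) * (I ((INR N + 1) * t) - I (INR N * t)) <= (1-q) * (t * S (INR N * t)))
        by (apply Rmult_le_compat_l; [lra|]; unfold I; lra).
      assert ((1 - q) * (t * S (INR N * t)) <= (1 - q) * (t * q ^ N)).
      { apply Rmult_le_compat_l; [lra|]. apply Rmult_le_compat_l; lra. }
      unfold I in *; cbv beta in *; nra. }
  assert (Hqn : forall N, 0 <= q ^ N) by (intro; apply pow_le; lra).
  assert (Hall : forall b, 0 <= b -> (1 - q) * I b <= t).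
  { intros b0 Hb0. destruct (INR_unbounded (b0 / t)) as [N HN].
    assert (b0 <= INR N * t).
    { apply Rmult_gt_compat_r with (r := t) in HN; [|lra].
      unfold Rdiv in HN. rewrite Rmult_assoc, Rinv_l in HN by lra. lra. }
    pose proof (seg_low S Hmono pr b0 (INR N * t) ltac:(lra)). 
    pose proof (Hb (INR N * t)).
    unfold I in *; cbv beta in *.
    assert (RiemannInt (pr b0) <= RiemannInt (pr (INR N * t))) by nra.
    specialize (HIN N). specialize (Hqn N).
    assert ((1 - q) * RiemannInt (pr b0) <= (1 - q) * RiemannInt (pr (INR N * t))) by (apply Rmult_le_compat_l; lra).
    nra. }
  assert (Hmpos : 0 < m).
  { destruct (Hrc 0 (1/2) ltac:(lra)) as [d [Hd Hu]].
    set (c := d / 2).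
    assert (Sc : S c > 1/2).
    { specialize (Hu c ltac:(unfold c; lra)). rewrite (H1 0) in Hu by lra.
      apply Rabs_def2 in Hu. lra. }
    destruct (Hm (c/4) ltac:(unfold c; lra)) as [M HM].
    set (b := Rmax M c).
    specialize (HM b (Rmax_l _ _)).
    pose proof (seg_low S Hmono pr c b ltac:(split; [unfold c; lra | apply Rmax_r])).
    pose proof (seg_low S Hmono pr 0 c ltac:(unfold c; lra)) as Hz.
    cbv beta in Hz; rewrite (I0 S pr) in Hz.
    pose proof (Hb b).
    assert (0 <= b - c) by (pose proof (Rmax_r M c); unfold b; lra).
    apply Rabs_def2 in HM.
    assert (0 <= (b - c) * S b) by nra.
    unfold c in *. nra. }
  assert (Hqm : (1 - q) * m <= t).
  { destruct (Rle_or_lt ((1 - q) * m) t) as [|Hc]; [assumption|].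
    exfalso. set (e := ((1 - q) * m - t) / 2).
    destruct (Hm e ltac:(unfold e; lra)) as [M HM].
    set (b := Rmax M 0).
    specialize (HM b (Rmax_l _ _)). apply Rabs_def2 in HM.
    specialize (Hall b (Rmax_r _ _)). 
    unfold I in Hall; cbv beta in Hall.
    assert ((1 - q) * m <= (1 - q) * (RiemannInt (pr b) + e)) by (apply Rmult_le_compat_l; lra).
    assert (0 < e) by (unfold e; lra).
    assert (0 <= q * e) by nra.
    unfold e in *; nra. }
  assert (HG : q <= G t).
  { destruct (Rle_or_lt q (G t)) as [|Hc]; [assumption|]. exfalso.
    destruct (Htail t ((q - G t)/2) ltac:(lra)) as [d [Hd Hu]].
    specialize (Hu (t - d/2) ltac:(lra)). apply Rabs_def2 in Hu.
    pose proof (Hmono (t - d/2) t ltac:(lra)). fold q in H. lra. }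
  pose proof (exp_ineq1 1 ltac:(lra)).
  assert (1 - q <= t / m).
  { unfold Rdiv. apply Rmult_le_reg_r with m; [lra|].
    rewrite Rmult_assoc, Rinv_l by lra. lra. }
  assert (t / m <= exp 1 * t / m).
  { unfold Rdiv. rewrite Rmult_assoc. assert (0 <= t * / m).
    { apply Rmult_le_pos; [lra|]. apply Rlt_le, Rinv_0_lt_compat; lra. } nra. }
  lra.
Qed.
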